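(* Let $S$ and $T$ be asynchronous automaton semigroups. Then the normal ideal extension of $S$ by $T$ is an asynchronous automaton semigroup.
   Context: An asynchronous automaton is $(Q,\Sigma,t,o)$ with $Q$ a finite set of states, $\Sigma$ a finite alphabet, $t:Q\times\Sigma\to Q$ and $o:Q\times\Sigma\to\Sigma^*$. Each state $q$ induces $q:\Sigma^*\to\Sigma^*$ by $q(\emptyset)=\emptyset$, $q(\sigma w)=o(q,\sigma)\,q'(w)$ with $q'=t(q,\sigma)$; an asynchronous automaton semigroup is (a semigroup isomorphic to) the semigroup of maps generated under composition by the states. For semigroups $S,T$, the normal ideal extension of $S$ by $T$ is the disjoint union $S\sqcup T$ with product $x\cdot y=xy$ if $x,y\in S$ or $x,y\in T$, $x\cdot y=y$ if $x\in S,y\in T$, and $x\cdot y=x$ if $x\in T,y\in S$. *)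

(* Defs.v *)
From mathcomp Require Import all_boot.
Set Implicit Arguments. Unset Strict Implicit. Unset Printing Implicit Defensive.

Record async_automaton := AsyncAutomaton {
  aa_Q : finType;
  aa_Sigma : finType;
  aa_t : aa_Q -> aa_Sigma -> aa_Q;
  aa_o : aa_Q -> aa_Sigma -> seq aa_Sigma
}.

Fixpoint state_map (M : async_automaton) (q : aa_Q M) (w : seq (aa_Sigma M))
  : seq (aa_Sigma M) :=
  match w with
  | [::] => [::]
  | s :: w' => aa_o q s ++ state_map (aa_t q s) w'
  end.

(* The semigroup of maps generated under composition by the state maps.
   Convention: the product f.g of two maps is "first f, then g",
   i.e. the map w |-> g (f w). *)
Definition comp_lr (Sg : Type) (f g : seq Sg -> seq Sg) : seq Sg -> seq Sg :=
  fun w => g (f w).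

Inductive generated (M : async_automaton)
  : (seq (aa_Sigma M) -> seq (aa_Sigma M)) -> Prop :=
  | gen_state : forall q : aa_Q M, generated (state_map q)
  | gen_comp : forall f g, generated f -> generated g ->
      generated (comp_lr f g).

Definition is_async_automaton_semigroup (A : Type) (mul : A -> A -> A) : Prop :=
  exists (M : async_automaton)
         (phi : A -> seq (aa_Sigma M) -> seq (aa_Sigma M)),
    [/\ injective phi,
        (forall x y, phi (mul x y) = comp_lr (phi x) (phi y)),
        (forall x, generated (phi x)) &
        (forall f, generated f -> exists x, phi x = f)].

Definition associative_op (A : Type) (mul : A -> A -> A) : Prop :=
  forall x y z, mul x (mul y z) = mul (mul x y) z.

Definition normal_ideal_ext (S T : Type) (mulS : S -> S -> S) (mulT : T -> T -> T)
  (x y : S + T) : S + T :=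
  match x, y with
  | inl a, inl b => inl (mulS a b)
  | inr a, inr b => inr (mulT a b)
  | inl _, inr b => inr b
  | inr a, inl _ => inr a
  end.

(* Main.v *)
Require Import Defs.
From mathcomp Require Import all_boot.
From Stdlib Require Import ClassicalEpsilon FunctionalExtensionality.
Definition and_proj2 {A B : Prop} (h : A /\ B) : B := match h with conj _ b => b end.
Set Implicit Arguments. Unset Strict Implicit. Unset Printing Implicit Defensive.

Lemma catsI' (T : Type) (s a b : seq T) : s ++ a = s ++ b -> a = b.
Proof. by elim: s => //= x s IH [] /IH. Qed.

Definition reach (M : async_automaton) (q : aa_Q M) (u : seq (aa_Sigma M)) :=
  foldl (@aa_t M) q u.

Lemma sm_cat M (q : aa_Q M) u v :
  state_map q (u ++ v) = state_map q u ++ state_map (reach q u) v.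
Proof. by elim: u q => //= x u IH q; rewrite IH catA. Qed.

Fixpoint cs (M : async_automaton) (ql : seq (aa_Q M)) (w : seq (aa_Sigma M))
  : seq (aa_Sigma M) :=
  match ql with
  | [::] => w
  | q :: ql' => cs ql' (state_map q w)
  end.

Lemma cs_cat M (ql pl : seq (aa_Q M)) w : cs (ql ++ pl) w = cs pl (cs ql w).
Proof. by elim: ql w => //= q ql IH w. Qed.

Lemma cs_nil M (ql : seq (aa_Q M)) : cs ql [::] = [::].
Proof. by elim: ql. Qed.

Lemma gen_cs M f : @generated M f -> exists ql, ql != [::] /\ f = cs ql.
Proof.
elim=> [q|f0 g _ [ql [nq ->]] _ [pl [np ->]]].
  by exists [:: q]; split=> //; apply: functional_extensionality.
exists (ql ++ pl); split; first by case: ql nq.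
by apply: functional_extensionality => w; rewrite cs_cat.
Qed.

Lemma cs_gen M (ql : seq (aa_Q M)) : ql != [::] -> generated (cs ql).
Proof.
elim: ql => // q [|p pl] IH _.
  have -> : cs [:: q] = state_map q by apply: functional_extensionality.
  exact: gen_state.
exact: (gen_comp (gen_state q) (IH isT)).
Qed.

Fixpoint res (M : async_automaton) (ql : seq (aa_Q M)) (u : seq (aa_Sigma M))
  : seq (aa_Q M) :=
  match ql with
  | [::] => [::]
  | q :: ql' => reach q u :: res ql' (state_map q u)
  end.

Lemma cs_cat2 M (ql : seq (aa_Q M)) u v : cs ql (u ++ v) = cs ql u ++ cs (res ql u) v.
Proof. by elim: ql u v => //= q ql IH u v; rewrite sm_cat IH. Qed.

Definition ext_t (M1 M2 : async_automaton) (q : aa_Q M1 + aa_Q M2)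
  (c : option (aa_Sigma M1 + aa_Sigma M2)) : aa_Q M1 + aa_Q M2 :=
  match q, c with
  | inl p, Some (inl x) => inl (aa_t p x)
  | inr p, Some (inr y) => inr (aa_t p y)
  | _, _ => q
  end.

Definition ext_o (M1 M2 : async_automaton) (q : aa_Q M1 + aa_Q M2)
  (c : option (aa_Sigma M1 + aa_Sigma M2)) : seq (option (aa_Sigma M1 + aa_Sigma M2)) :=
  match q, c with
  | inl p, Some (inl x) => map (fun z => Some (inl z)) (aa_o p x)
  | inl _, _ => [:: c]
  | inr p, Some (inr y) => map (fun z => Some (inr z)) (aa_o p y)
  | inr _, _ => [::]
  end.

Definition EA (M1 M2 : async_automaton) : async_automaton :=
  @AsyncAutomaton (aa_Q M1 + aa_Q M2)%type (option (aa_Sigma M1 + aa_Sigma M2))%type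
    (@ext_t M1 M2) (@ext_o M1 M2).

Definition emb1 (M1 M2 : async_automaton) (u : seq (aa_Sigma M1)) : seq (aa_Sigma (EA M1 M2)) :=
  map (fun z => Some (inl z)) u.
Definition emb2 (M1 M2 : async_automaton) (u : seq (aa_Sigma M2)) : seq (aa_Sigma (EA M1 M2)) :=
  map (fun z => Some (inr z)) u.

Fixpoint prj2 (M1 M2 : async_automaton) (w : seq (aa_Sigma (EA M1 M2))) : seq (aa_Sigma M2) :=
  match w with
  | [::] => [::]
  | Some (inr y) :: w' => y :: prj2 w'
  | _ :: w' => prj2 w'
  end.

Definition notS1 (M1 M2 : async_automaton) (c : aa_Sigma (EA M1 M2)) : bool :=
  if c is Some (inl _) then false else true.

Definition Lcs (M1 M2 : async_automaton) (ql : seq (aa_Q M1)) :=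
  @cs (EA M1 M2) (map inl ql).

Lemma Lcs_cons M1 M2 q ql w :
  @Lcs M1 M2 (q :: ql) w = @Lcs M1 M2 ql (@state_map (EA M1 M2) (inl q) w).
Proof. by []. Qed.

Lemma prj2_cat M1 M2 (u v : seq (aa_Sigma (EA M1 M2))) :
  prj2 (u ++ v) = prj2 u ++ prj2 v.
Proof. by elim: u => //= [[[x|y]|]] u ->. Qed.

Lemma prj2_emb1 M1 M2 u : prj2 (@emb1 M1 M2 u) = [::].
Proof. by elim: u. Qed.

Lemma prj2_emb2 M1 M2 u : prj2 (@emb2 M1 M2 u) = u.
Proof. by elim: u => //= y u ->. Qed.

Lemma emb1_cat M1 M2 u v : @emb1 M1 M2 (u ++ v) = emb1 M2 u ++ emb1 M2 v.
Proof. exact: map_cat. Qed.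
Lemma emb2_cat M1 M2 u v : @emb2 M1 M2 (u ++ v) = emb2 M1 u ++ emb2 M1 v.
Proof. exact: map_cat. Qed.

Lemma emb1_inj M1 M2 : injective (@emb1 M1 M2).
Proof. by apply: inj_map => x y []. Qed.
Lemma emb2_inj M1 M2 : injective (@emb2 M1 M2).
Proof. by apply: inj_map => x y []. Qed.

Lemma smL_emb M1 M2 (q : aa_Q M1) u :
  @state_map (EA M1 M2) (inl q) (emb1 M2 u) = emb1 M2 (state_map q u).
Proof.
elim: u q => //= x u IH q.
by rewrite IH emb1_cat.
Qed.

Lemma smL_emb_cat M1 M2 (q : aa_Q M1) u c v : notS1 c ->
  @state_map (EA M1 M2) (inl q) (emb1 M2 u ++ c :: v)
  = emb1 M2 (state_map q u) ++ c :: @state_map (EA M1 M2) (inl (reach q u)) v.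
Proof.
elim: u q => [|x u IH] q /= hc.
  by case: c hc => [[x|y]|].
by rewrite IH // emb1_cat -catA.
Qed.

Lemma LcsE M1 M2 ql u : @Lcs M1 M2 ql (emb1 M2 u) = emb1 M2 (cs ql u).
Proof. by elim: ql u => //= q ql IH u; rewrite Lcs_cons smL_emb IH. Qed.

Lemma Lcs_cat M1 M2 ql u c v : notS1 c ->
  @Lcs M1 M2 ql (emb1 M2 u ++ c :: v) = emb1 M2 (cs ql u) ++ c :: @Lcs M1 M2 (res ql u) v.
Proof.
move=> hc; elim: ql u v => //= q ql IH u v.
by rewrite !Lcs_cons smL_emb_cat // IH.
Qed.

Lemma Lcs_nil M1 M2 ql : @Lcs M1 M2 ql [::] = [::].
Proof. exact: cs_nil. Qed.

Lemma Lcs_None M1 M2 ql : @Lcs M1 M2 ql [:: None] = [:: None].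
Proof.
have := @Lcs_cat M1 M2 ql [::] None [::] isT.
by rewrite Lcs_nil cs_nil.
Qed.

Lemma decomp M1 M2 (w : seq (aa_Sigma (EA M1 M2))) :
  (exists u, w = emb1 M2 u) \/
  exists u c v, [/\ w = emb1 M2 u ++ c :: v, notS1 c & size v < size w].
Proof.
elim: w => [|x w [[u ->]|[u [c [v [-> hc hs]]]]]]; first by left; exists [::].
- case: x => [[a|b]|].
  + by left; exists (a :: u).
  + by right; exists [::], (Some (inr b)), (emb1 M2 u).
  + by right; exists [::], None, (emb1 M2 u).
- case: x => [[a|b]|].
  + right; exists (a :: u), c, v; split=> //.
    by rewrite /= ltnS ltnW.
  + by right; exists [::], (Some (inr b)), (emb1 M2 u ++ c :: v).
  + by right; exists [::], None, (emb1 M2 u ++ c :: v).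
Qed.

Lemma WD M1 M2 w (ql ql' : seq (aa_Q M1)) :
  cs ql =1 cs ql' -> @Lcs M1 M2 ql w = @Lcs M1 M2 ql' w.
Proof.
move: {2}(size w) (leqnn (size w)) => n.
elim: n w ql ql' => [|n IH] w ql ql' hs heq.
  by case: w hs => // _; rewrite !Lcs_nil.
case: (decomp w) => [[u ->]|[u [c [v [ew hc hv]]]]].
  by rewrite !LcsE heq.
rewrite ew in hs hv *.
rewrite !Lcs_cat // heq; congr (_ ++ _ :: _).
apply: IH; first by rewrite -ltnS (leq_trans hv hs).
move=> x; apply: (@catsI' _ (cs ql' u)).
by rewrite -{1}(heq u) -!cs_cat2 heq.
Qed.

Lemma prj2_smL M1 M2 (q : aa_Q M1) w :
  prj2 (@state_map (EA M1 M2) (inl q) w) = prj2 w.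
Proof.
elim: w q => //= [[[x|y]|]] w IH q /=.
- by rewrite prj2_cat prj2_emb1 IH.
- by rewrite IH.
- by rewrite IH.
Qed.

Lemma prj2_Lcs M1 M2 ql w : prj2 (@Lcs M1 M2 ql w) = prj2 w.
Proof. by elim: ql w => //= q ql IH w; rewrite Lcs_cons IH prj2_smL. Qed.

Lemma smL_emb2 M1 M2 (q : aa_Q M1) u :
  @state_map (EA M1 M2) (inl q) (emb2 M1 u) = emb2 M1 u.
Proof. by elim: u => //= y u ->. Qed.

Lemma Lcs_emb2 M1 M2 ql u : @Lcs M1 M2 ql (emb2 M1 u) = emb2 M1 u.
Proof. by elim: ql => //= q ql IH; rewrite Lcs_cons smL_emb2. Qed.

Lemma smR M1 M2 (q : aa_Q M2) w :
  @state_map (EA M1 M2) (inr q) w = emb2 M1 (state_map q (prj2 w)).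
Proof.
elim: w q => //= [[[x|y]|]] w IH q /=.
- by rewrite IH.
- by rewrite IH emb2_cat.
- by rewrite IH.
Qed.

Lemma gen_nil M f : @generated M f -> f [::] = [::].
Proof. by elim=> // f0 g _ h1 _ h2; rewrite /comp_lr h1 h2. Qed.

Theorem mainTheorem16 (S T : Type) (mulS : S -> S -> S) (mulT : T -> T -> T)
  (assocS : associative_op mulS) (assocT : associative_op mulT)
  (hS : is_async_automaton_semigroup mulS)
  (hT : is_async_automaton_semigroup mulT) :
  is_async_automaton_semigroup (normal_ideal_ext mulS mulT).
Proof.
have [M1 [phi1 [inj1 hom1 gen1 surj1]]] := hS.
have [M2 [phi2 [inj2 hom2 gen2 surj2]]] := hT.
have H a : exists ql, ql != [::] /\ phi1 a = cs ql := gen_cs (gen1 a).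
pose qS a := proj1_sig (constructive_indefinite_description _ (H a)).
have qSP a : qS a != [::] /\ phi1 a = cs (qS a).
  exact: (proj2_sig (constructive_indefinite_description _ (H a))).
pose phiR b := fun w => emb2 M1 (phi2 b (@prj2 M1 M2 w)).
exists (EA M1 M2), (fun x => match x with inl a => @Lcs M1 M2 (qS a) | inr b => phiR b end).
have liftR f : generated f -> generated (fun w => emb2 M1 (f (@prj2 M1 M2 w))).
  elim=> [q|f0 g _ h1 _ h2].
    have -> : (fun w => emb2 M1 (state_map q (@prj2 M1 M2 w))) = state_map (M:=EA M1 M2) (inr q).
      by apply: functional_extensionality => w; rewrite smR.
    exact: gen_state.
  have -> : (fun w => emb2 M1 (comp_lr f0 g (@prj2 M1 M2 w))) =
    comp_lr (fun w => emb2 M1 (f0 (@prj2 M1 M2 w))) (fun w => emb2 M1 (g (@prj2 M1 M2 w))).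
    by apply: functional_extensionality => w; rewrite /comp_lr prj2_emb2.
  exact: gen_comp.
have hom : forall x y, (match normal_ideal_ext mulS mulT x y with
      | inl a => @Lcs M1 M2 (qS a) | inr b => phiR b end) =
    comp_lr (match x with inl a => @Lcs M1 M2 (qS a) | inr b => phiR b end)
            (match y with inl a => @Lcs M1 M2 (qS a) | inr b => phiR b end).
  move=> [a|b] [a'|b']; apply: functional_extensionality => w /=; rewrite /comp_lr /phiR.
  - rewrite /Lcs -cs_cat -map_cat; apply: WD => v.
    by rewrite -(and_proj2 (qSP _)) hom1 cs_cat -(and_proj2 (qSP a)) -(and_proj2 (qSP a')).
  - by rewrite prj2_Lcs.
  - by rewrite Lcs_emb2.
  - by rewrite hom2 prj2_emb2.
split.
- move=> [a|b] [a'|b'] /= e.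
  + congr inl; apply: inj1.
    rewrite (and_proj2 (qSP a)) (and_proj2 (qSP a')).
    apply: functional_extensionality => u; apply: (@emb1_inj M1 M2).
    by rewrite -!LcsE e.
  + have := congr1 (fun f => f [:: None]) e.
    rewrite /phiR /= Lcs_None.
    by rewrite (gen_nil (gen2 b')).
  + have := congr1 (fun f => f [:: None]) e.
    rewrite /phiR /= Lcs_None.
    by rewrite (gen_nil (gen2 b)).
  + congr inr; apply: inj2; apply: functional_extensionality => u.
    apply: (@emb2_inj M1 M2).
    have := congr1 (fun f => f (emb2 M1 u)) e.
    by rewrite /phiR /= prj2_emb2.
- exact: hom.
- move=> [a|b]; last exact: liftR.
  rewrite /Lcs; apply: cs_gen; by case: (qSP a) => h _; case: (qS a) h.
- move=> f; elim=> [[q|q]|f0 g _ [x <-] _ [y <-]].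
  + have [a ha] := surj1 _ (gen_state q).
    exists (inl a) => /=; apply: functional_extensionality => w.
    have -> : state_map (M:=EA M1 M2) (inl q) w = @Lcs M1 M2 [:: q] w by [].
    by apply: WD => v; rewrite -(and_proj2 (qSP a)) ha.
  + have [b hb] := surj2 _ (gen_state q).
    exists (inr b) => /=; apply: functional_extensionality => w.
    by rewrite /phiR hb smR.
  + by exists (normal_ideal_ext mulS mulT x y); exact: hom.
Qed.
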